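(* Let $(x_k)_{k\ge0}$ be an arbitrary sequence of numbers (or indeterminates), define $a_n=x_n$ if $n=2^k-1$ for some integer $k\ge0$ and $a_n=0$ otherwise, and let $d(n)=\det\left(a_{i+j}\right)_{i,j=0}^{n-1}$ with $d(0)=1$. Then $d(0)=1$, $d(1)=x_0$, $d(2)=-x_1^2$, and for all integers $k,n$ with $1<2^{k-1}<n\le 2^k$, $$d(n)=(-1)^n x_{2^k-1}^{2n-2^k}\,d(2^k-n).$$ *)

(* Defs.v *)
(* Entries live in an arbitrary commutative ring R
   ("numbers or indeterminates"). *)
From HB Require Import structures.
From mathcomp Require Import all_boot all_order all_algebra.
Set Implicit Arguments. Unset Strict Implicit. Unset Printing Implicit Defensive.
Import GRing.Theory.
Local Open Scope ring_scope.

(* n = 2^k - 1 for some k >= 0, i.e. n+1 is a power of two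
   (any such k satisfies k < n+1, since 2^k > k). *)
Definition is_pow2_minus1 (n : nat) : bool :=
  [exists k : 'I_n.+1, n.+1 == 2 ^ (k : nat)]%N.

Definition aseq (R : comRingType) (x : nat -> R) (n : nat) : R :=
  if is_pow2_minus1 n then x n else 0.

Definition dseq (R : comRingType) (x : nat -> R) (n : nat) : R :=
  \det (\matrix_(i < n, j < n) aseq x (i + j)%N).

(* Main.v *)
Require Import Defs.
From mathcomp Require Import all_boot all_order all_algebra.
From mathcomp Require Import zify ring.
Set Implicit Arguments. Unset Strict Implicit.
Import GRing.Theory.
Local Open Scope ring_scope.
Lemma aseq_hi (R : comRingType) (x : nat -> R) K v :
  (2 ^ K <= v)%N -> (v <= 4 * 2 ^ K - 2)%N -> v <> (2 * 2 ^ K - 1)%N -> aseq x v = 0.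
Proof.
move=> h1 h2 h3; rewrite /aseq; case: ifP => // /existsP [t /eqP Ht]; exfalso.
have a1 : (2 ^ K < 2 ^ t)%N by lia.
have a2 : (2 ^ t < 2 ^ K.+2)%N by rewrite !expnS; lia.
rewrite !ltn_exp2l // in a1 a2.
have et : (t : nat) = K.+1 by lia.
by move: Ht; rewrite et expnS; lia.
Qed.
Lemma aseq_top (R : comRingType) (x : nat -> R) K :
  aseq x (2 * 2 ^ K - 1)%N = x (2 * 2 ^ K - 1)%N.
Proof.
rewrite /aseq ifT // /is_pow2_minus1; apply/existsP.
have lt : (K.+1 < (2 * 2 ^ K - 1).+1)%N.
  have := ltn_expl K.+1 (isT : (1 < 2)%N); rewrite expnS; lia.
exists (Ordinal lt) => /=; rewrite expnS; apply/eqP; have := expn_gt0 2 K; lia.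
Qed.
Lemma det_row1 (R : comRingType) n (A : 'M[R]_n) i0 j0 :
  (forall j, j != j0 -> A i0 j = 0) -> \det A = A i0 j0 * cofactor A i0 j0.
Proof.
move=> H; rewrite (expand_det_row _ i0) (bigD1 j0) //= big1 ?addr0 // => j /H ->.
by rewrite mul0r.
Qed.
Lemma det_col1 (R : comRingType) n (A : 'M[R]_n) i0 j0 :
  (forall i, i != i0 -> A i j0 = 0) -> \det A = A i0 j0 * cofactor A i0 j0.
Proof.
move=> H; rewrite (expand_det_col _ j0) (bigD1 i0) //= big1 ?addr0 // => j /H ->.
by rewrite mul0r.
Qed.

Definition phi (m q t : nat) : nat := if (t < m)%N then t else (t + q)%N.
Definition Gmat (R : comRingType) (x : nat -> R) m q s : 'M[R]_s :=
  \matrix_(i < s, j < s) aseq x (phi m q i + phi m q j).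

Lemma lift_inord n m (j : 'I_n) : (m < n.+1)%N ->
  (lift (inord m : 'I_n.+1) j : nat) = (if (j < m)%N then j : nat else (j : nat).+1).
Proof. move=> hm; rewrite /= /bump inordK //; case: ltnP => h; lia. Qed.

Lemma Gind (R : comRingType) (x : nat -> R) K m p :
  (m + p = 2 ^ K)%N ->
  forall r q s, (q + r = p)%N -> s = (m + 2 * r)%N ->
  \det (Gmat x m q s) = (-1) ^+ r * x (2 * 2 ^ K - 1)%N ^+ (2 * r)
     * \det (Gmat x m (q + r) m).
Proof.
move=> hmp; elim=> [|r IH] q s hq hs.
  by move: hs; rewrite muln0 addn0 => ->; rewrite addn0 !expr0 !mul1r.
have -> : s = (m + 2 * r).+2 by lia.
move SE: (m + 2 * r)%N => S.
have mS : (m < S.+2)%N by lia.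
rewrite (@det_row1 _ _ _ ord_max (inord m)); last first.
  move=> j hj; rewrite mxE; apply: (@aseq_hi _ _ K).
  - rewrite /phi /=; case: ifP; case: ifP; lia.
  - have := ltn_ord j; rewrite /phi /=; case: ifP; case: ifP; lia.
  - have : (j : nat) <> m by move=> e; move/eqP: hj; apply; apply/val_inj; rewrite /= inordK.
    rewrite /phi /=; case: ifP; case: ifP; lia.
rewrite /cofactor.
set B := row' _ _.
rewrite (@det_col1 _ _ B (inord m) ord_max); last first.
  move=> i hi; rewrite !mxE; apply: (@aseq_hi _ _ K).
  - rewrite lift_max lift_inord // /phi /=; have := ltn_ord i; case: ifP; case: ifP; case: ifP; lia.
  - have h1 : (S < m)%N = false by lia.
    have h2 : (S.+1 < m)%N = false by lia.
    rewrite lift_max lift_inord // /phi /= h1 h2; have := ltn_ord i; rewrite /=; case: ifP; lia.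
  - have : (i : nat) <> m by move=> e; move/eqP: hi; apply; apply/val_inj => /=; rewrite inordK //=; lia.
    have h1 : (S < m)%N = false by lia.
    have h2 : (S.+1 < m)%N = false by lia.
    rewrite lift_max lift_inord // /phi /= h1 h2; have := ltn_ord i; rewrite /=; case: ifP; lia.
rewrite /cofactor.
have e1 : Gmat x m q S.+2 ord_max (inord m) = x (2 * 2 ^ K - 1)%N.
  rewrite mxE /phi /= inordK // ltnn.
  have -> : (S.+1 < m)%N = false by lia.
  have -> : (S.+1 + q + (m + q))%N = (2 * 2 ^ K - 1)%N by lia.
  exact: aseq_top.
have e2 : B (inord m) ord_max = x (2 * 2 ^ K - 1)%N.
  rewrite /B !mxE lift_max lift_inord //= /phi inordK; last by lia. rewrite ltnn.
  have -> : (S < m)%N = false by lia.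
  have -> : (S.+1 < m)%N = false by lia.
  have -> : (m + q + (S.+1 + q))%N = (2 * 2 ^ K - 1)%N by lia.
  exact: aseq_top.
have e3 : row' (inord m) (col' ord_max B) = Gmat x m q.+1 S.
  apply/matrixP => a b; rewrite /B !mxE lift_max lift_inord; last by lia.
  rewrite lift_inord; last by lia.
  rewrite lift_max; congr aseq; rewrite /phi.
  have F (t : nat) : (if (if (t < m)%N then t else t.+1) < m then (if (t < m)%N then t else t.+1)
     else (if (t < m)%N then t else t.+1) + q)%N = (if (t < m)%N then t else t + q.+1)%N.
    by case: (ltnP t m) => h; [rewrite h | rewrite ltnNge (leqW h) /=]; lia.
  by rewrite !F.
rewrite e1 e2 e3 (IH q.+1 S) //; last by lia.
rewrite addSnnS.
have -> : ((ord_max : 'I_S.+2) + (inord m : 'I_S.+2))%N = (S.+1 + m)%N by rewrite /= inordK.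
have -> : ((inord m : 'I_S.+1) + (ord_max : 'I_S.+1))%N = (m + S)%N by rewrite /= inordK //; lia.
rewrite mulnS !exprD exprS.
have E (t : nat) : (-1) ^+ t * (-1) ^+ t = 1 :> R.
  by rewrite -exprD addnn -mul2n exprM sqrrN !expr1n.
set c := x _; set D := \det _.
transitivity (((-1) ^+ S * (-1) ^+ S) * ((-1) ^+ m * (-1) ^+ m) *
   ((-1) ^+ r.+1 * c ^+ 2 * c ^+ r * c ^+ r * D) : R).
  by rewrite !exprS; ring.
by rewrite !E; ring.
Qed.

Unset Implicit Arguments.
Theorem theorem4p5 (R : comRingType) (x : nat -> R) :
  [/\ dseq x 0 = 1, dseq x 1 = x 0%N, dseq x 2 = - x 1%N ^+ 2 &
   forall k n : nat, (1 < 2 ^ (k - 1) < n)%N -> (n <= 2 ^ k)%N ->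
     dseq x n = (-1) ^+ n * x (2 ^ k - 1)%N ^+ (2 * n - 2 ^ k)%N
                * dseq x (2 ^ k - n)%N].
Proof.
have a0 : aseq x 0 = x 0%N.
  by rewrite /aseq ifT //; apply/existsP; exists ord0.
have a1 : aseq x 1 = x 1%N := aseq_top x 0.
have a2 : aseq x 2 = 0 by apply: (@aseq_hi _ _ 1).
split.
- by rewrite /dseq det_mx00.
- by rewrite /dseq det_mx11 mxE.
- rewrite /dseq (expand_det_row _ ord0) !big_ord_recl big_ord0 /cofactor !det_mx11 !mxE /=.
  rewrite /bump /= a0 a1 a2 expr0 expr1; ring.
move=> k n /andP [h1 h2] h3.
have [k' ek] : exists k', k = k'.+2.
  case: k h1 h2 h3 => [|[|k']] //; by exists k'.
subst k; rewrite /= subn1 /= in h1 h2.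
set h := (2 ^ k'.+1)%N in h1 h2.
have eN : (2 ^ k'.+2 = 2 * h)%N by rewrite expnS.
rewrite eN; rewrite eN in h3.
set p := (n - h)%N.
set m := (h - p)%N.
have hmp : (m + p = 2 ^ k'.+1)%N by rewrite /m /p -/h; lia.
have G := @Gind _ x k'.+1 m p hmp p 0 n erefl.
rewrite add0n in G.
have E1 : dseq x n = \det (Gmat x m 0 n).
  rewrite /dseq; congr (\det _); apply/matrixP => i j; rewrite !mxE /phi.
  by case: ifP; case: ifP; rewrite ?addn0.
have E2 : \det (Gmat x m p m) = dseq x m.
  rewrite /dseq; congr (\det _); apply/matrixP => i j; rewrite !mxE /phi.
  by rewrite !ltn_ord.
rewrite E1 G; last by rewrite /m /p; lia.
rewrite E2.
have -> : (2 * h - n = m)%N by rewrite /m /p; lia.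
have -> : (2 * n - 2 * h = 2 * p)%N by rewrite /p; lia.
have -> : (-1) ^+ n = (-1) ^+ p :> R.
  have -> : n = (p + 2 * 2 ^ k')%N by rewrite /p; move: h2; rewrite /h expnS; lia.
  by rewrite exprD exprM sqrrN !expr1n mulr1.
done.
Qed.
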